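(* Let $n\ge1$ and $K=[1/\max(i,j)]_{i,j=1}^n$. Then $K$ is invertible, $\|K\|\le 4$, and $\|K^{-1}\|\le 4n^2$, where $\|\cdot\|$ denotes the operator (spectral) norm. *)

(* Defs.v *)
From HB Require Import structures.
From mathcomp Require Import all_boot all_order all_algebra.
From mathcomp Require Import classical_sets reals.
Set Implicit Arguments. Unset Strict Implicit. Unset Printing Implicit Defensive.
Import Order.TTheory GRing.Theory Num.Theory.
Local Open Scope ring_scope.
Local Open Scope classical_set_scope.

Definition vnorm2 (R : realType) (n : nat) (x : 'cV[R]_n) : R :=
  Num.sqrt (\sum_(i < n) x i 0 ^+ 2).

Definition opnorm (R : realType) (n : nat) (A : 'M[R]_n) : R :=
  sup [set vnorm2 (A *m x) / vnorm2 x | x in [set x : 'cV[R]_n | x != 0]].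

(* K = [1 / max(i,j)]_{i,j=1..n}  (1-based indices, so i.+1, j.+1). *)
Definition Kmat (R : realType) (n : nat) : 'M[R]_n :=
  \matrix_(i < n, j < n) ((maxn i.+1 j.+1)%:R)^-1.

(* Main.v *)
Require Import Defs.
From HB Require Import structures.
From mathcomp Require Import all_boot all_order all_algebra.
From mathcomp Require Import classical_sets reals.
From mathcomp Require Import ring lra zify.
Import Order.TTheory GRing.Theory Num.Theory.
Local Open Scope ring_scope.

Section S.
Variable R : realType.

Definition Kf (i j : nat) : R := ((maxn i.+1 j.+1)%:R)^-1.

Fixpoint cw (k : nat) : R := match k with
  | 0 => 1 | k'.+1 => cw k' * (2 * k').+1%:R / (2 * k').+2%:R end.

Lemma cw_pos k : 0 < cw k.
Proof. elim: k => [|k IH] /=; first exact: ltr01.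
by rewrite divr_gt0 // mulr_gt0 // ltr0n. Qed.

Lemma cw_le k : cw k.+1 <= cw k.
Proof. rewrite /= ler_pdivrMr ?ltr0n // ler_pM2l ?cw_pos // ler_nat. by []. Qed.

Lemma sum_cw m : \sum_(0 <= j < m.+1) cw j = (2 * m).+1%:R * cw m.
Proof.
elim: m => [|m IH]; first by rewrite big_nat1 /= mulr1.
rewrite big_nat_recr //= IH.
have h : (2 * m).+2%:R != 0 :> R by rewrite pnatr_eq0.
move: h; rewrite !mulnSr -!natr1 ?natrD ?natrM /=; move=> h.
field.
by rewrite addr0 in h.
Qed.

Lemma cw_diff j : cw j / (j.+1)%:R = 2 * (cw j - cw j.+1).
Proof.
rewrite /=.
have h1 : (j.+1)%:R != 0 :> R by rewrite pnatr_eq0.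
have h2 : (2 * j).+2%:R != 0 :> R by rewrite pnatr_eq0.
move: h1 h2; rewrite -!natr1 ?natrD ?natrM /= => h1 h2.
field; rewrite addr0 in h2; by rewrite h1 h2.
Qed.

Lemma rowbound n i : (i < n)%N -> \sum_(0 <= j < n) Kf i j * cw j <= 4 * cw i.
Proof.
move=> lin.
rewrite (big_cat_nat _ (n:=i.+1)) //=.
have -> : \sum_(0 <= j < i.+1) Kf i j * cw j = (i.+1%:R)^-1 * \sum_(0 <= j < i.+1) cw j.
  rewrite big_distrr /=; apply: eq_big_nat => j /andP [_ hj].
  by rewrite /Kf (maxn_idPl _).
have -> : \sum_(i.+1 <= j < n) Kf i j * cw j = 2 * (cw i.+1 - cw n).
  rewrite (@eq_big_nat _ _ _ _ _ _ (fun j => 2 * (cw j - cw j.+1))); last first.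
    move=> k /andP [hk _]; rewrite /Kf (maxn_idPr _); last by rewrite ltnS ltnW.
    by rewrite mulrC cw_diff.
  rewrite -mulr_sumr (@telescope_sumr_eq _ i.+1 n (fun k => - cw k)) //.
    by rewrite opprK addrC.
  by move=> k _; rewrite opprK addrC.
rewrite sum_cw.
have h1 : (i.+1%:R)^-1 * ((2 * i).+1%:R * cw i) <= 2 * cw i.
  rewrite mulrA ler_pM2r ?cw_pos // ler_pdivrMl ?ltr0n // -natrM ler_nat.
  by have : (2 * i < i.+1 * 2)%N by lia.
have h2 : 2 * (cw i.+1 - cw n) <= 2 * cw i.
  rewrite ler_pM2l ?ltr0n //.
  have := cw_le i; have := cw_pos n; lra.
apply: le_trans (lerD h1 h2) _; lra.
Qed.

Lemma young (a x y : R) : 0 < a -> y * x <= (y ^+ 2 * a + x ^+ 2 / a) / 2.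
Proof.
move=> a0.
have h : 0 <= (y * a - x) ^+ 2 / (2 * a) by rewrite divr_ge0 ?sqr_ge0 // mulr_ge0 // ltW.
rewrite -subr_ge0; suff -> : (y ^+ 2 * a + x ^+ 2 / a) / 2 - y * x = (y * a - x) ^+ 2 / (2 * a) by [].
field; rewrite gt_eqF //.
Qed.

Lemma schur_bil n (A : nat -> nat -> R) (w : nat -> R) c :
 (forall i j, A i j = A j i) -> (forall i j, 0 <= A i j) -> (forall i, 0 < w i) ->
 (forall i, (i < n)%N -> \sum_(0 <= j < n) A i j * w j <= c * w i) ->
 forall x y : nat -> R,
 \sum_(0 <= i < n) \sum_(0 <= j < n) A i j * (y i * x j)
   <= c / 2 * (\sum_(0 <= i < n) y i ^+ 2 + \sum_(0 <= j < n) x j ^+ 2).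
Proof.
move=> As Ap wp Hw x y.
have P1 : \sum_(0 <= i < n) \sum_(0 <= j < n) A i j * (y i ^+ 2 * (w j / w i))
          <= c * \sum_(0 <= i < n) y i ^+ 2.
  rewrite mulr_sumr; apply: ler_sum_nat => i hi.
  have -> : \sum_(0 <= j < n) A i j * (y i ^+ 2 * (w j / w i))
          = y i ^+ 2 / w i * \sum_(0 <= j < n) A i j * w j.
    rewrite mulr_sumr; apply: eq_bigr => j _; ring.
  apply: le_trans (ler_wpM2l _ (Hw i hi)) _.
    by rewrite divr_ge0 ?sqr_ge0 // ltW.
  rewrite le_eqVlt; apply/orP; left; apply/eqP; field; rewrite gt_eqF //.
have P2 : \sum_(0 <= i < n) \sum_(0 <= j < n) A i j * (x j ^+ 2 * (w i / w j))
          <= c * \sum_(0 <= j < n) x j ^+ 2.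
  rewrite exchange_big_nat mulr_sumr; apply: ler_sum_nat => j hj.
  have -> : \sum_(0 <= i < n) A i j * (x j ^+ 2 * (w i / w j))
          = x j ^+ 2 / w j * \sum_(0 <= i < n) A j i * w i.
    rewrite mulr_sumr; apply: eq_bigr => i _; rewrite As; ring.
  apply: le_trans (ler_wpM2l _ (Hw j hj)) _.
    by rewrite divr_ge0 ?sqr_ge0 // ltW.
  rewrite le_eqVlt; apply/orP; left; apply/eqP; field; rewrite gt_eqF //.
apply: (@le_trans _ _ ((\sum_(0 <= i < n) \sum_(0 <= j < n) A i j * (y i ^+ 2 * (w j / w i))
   + \sum_(0 <= i < n) \sum_(0 <= j < n) A i j * (x j ^+ 2 * (w i / w j))) / 2)).
  rewrite -big_split /= mulr_suml; apply: ler_sum_nat => i _.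
  rewrite -big_split /= mulr_suml; apply: ler_sum_nat => j _.
  rewrite -mulrDr -mulrA; apply: ler_wpM2l => //.
  have := @young (w j / w i) (x j) (y i) (divr_gt0 (wp j) (wp i)).
  by rewrite invf_div.
have := lerD P1 P2; lra.
Qed.

Lemma Kbound n (x : nat -> R) :
  \sum_(0 <= i < n) (\sum_(0 <= j < n) Kf i j * x j) ^+ 2
    <= 16 * \sum_(0 <= j < n) x j ^+ 2.
Proof.
set Y := fun i => \sum_(0 <= j < n) Kf i j * x j.
have E : \sum_(0 <= i < n) Y i ^+ 2 =
   \sum_(0 <= i < n) \sum_(0 <= j < n) Kf i j * ((Y i / 2) * (2 * x j)).
  apply: eq_bigr => i _; rewrite expr2 {2}/Y mulr_sumr; apply: eq_bigr => j _.
  by field.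
have H := @schur_bil n Kf cw 4 (fun i j => ltac:(by rewrite /Kf maxnC))
   (fun i j => ltac:(by rewrite /Kf invr_ge0 ler0n)) cw_pos (@rowbound n)
   (fun j => 2 * x j) (fun i => Y i / 2).
rewrite -E in H.
have E1 : \sum_(0 <= i < n) (Y i / 2) ^+ 2 = (\sum_(0 <= i < n) Y i ^+ 2) / 4.
  rewrite mulr_suml; apply: eq_bigr => i _; by field.
have E2 : \sum_(0 <= j < n) (2 * x j) ^+ 2 = 4 * \sum_(0 <= j < n) x j ^+ 2.
  rewrite mulr_sumr; apply: eq_bigr => i _; ring.
rewrite E1 E2 in H.
change (\sum_(0 <= i < n) Y i ^+ 2 <= 16 * \sum_(0 <= j < n) x j ^+ 2).
lra.
Qed.

Definition ee n k : R := if (k < n)%N then (k.+1%:R)^-1 else 0.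
Definition dd n k : R := ee n k - ee n k.+1.

Lemma Kdecomp n i j : (i < n)%N -> (j < n)%N ->
  Kf i j = \sum_(0 <= k < n) (if (maxn i j <= k)%N then dd n k else 0).
Proof.
move=> hi hj.
have hm : (maxn i j <= n)%N by rewrite geq_max ltnW // ltnW.
rewrite (big_cat_nat _ (n := maxn i j)) //= big1_seq ?add0r; last first.
  by move=> k; rewrite mem_index_iota => /and3P [_ _ hk]; rewrite leqNgt hk.

rewrite (@eq_big_nat _ _ _ (maxn i j) n _ (fun k => (- ee n k.+1) - (- ee n k))); last first.
  by move=> k /andP [hk _]; rewrite hk /dd opprK addrC.
rewrite telescope_sumr // /ee ltnn opprK oppr0 add0r.
have -> : (maxn i j < n)%N by rewrite gtn_max hi hj.
by rewrite /Kf maxnSS.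
Qed.

Lemma dd_lb n k : (k < n)%N -> (n%:R ^+ 2)^-1 <= dd n k.
Proof.
move=> hk; rewrite /dd /ee hk.
have hn : (0 < n)%N by apply: leq_ltn_trans hk.
case: ltnP => hk1.
- have a1 : (0 : R) < k.+1%:R by rewrite ltr0n.
  have a2 : (0 : R) < k.+2%:R by rewrite ltr0n.
  have -> : k.+1%:R^-1 - k.+2%:R^-1 = ((k.+1 * k.+2)%:R : R)^-1.
    rewrite natrM -!natr1; field; rewrite -!natr1 in a1 a2.
    by rewrite !gt_eqF.
  rewrite lef_pV2 ?posrE ?exprn_gt0 ?ltr0n ?muln_gt0 // -natrX ler_nat.
  by rewrite expnS expn1 leq_mul // ltnW.
- have -> : n = k.+1 by apply/eqP; rewrite eqn_leq hk hk1.
  rewrite subr0 lef_pV2 ?posrE ?exprn_gt0 ?ltr0n // -natrX ler_nat.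
  by rewrite expnS expn1 leq_pmulr.
Qed.

Definition Sx n (x : nat -> R) k := \sum_(0 <= i < n) (if (i <= k)%N then x i else 0).

Lemma qf_decomp n (x : nat -> R) :
  \sum_(0 <= i < n) x i * \sum_(0 <= j < n) Kf i j * x j
  = \sum_(0 <= k < n) dd n k * Sx n x k ^+ 2.
Proof.
transitivity (\sum_(0 <= i < n) \sum_(0 <= j < n) \sum_(0 <= k < n)
   x i * ((if (maxn i j <= k)%N then dd n k else 0) * x j)).
  apply: eq_big_nat => i /andP [_ hi]; rewrite mulr_sumr.
  apply: eq_big_nat => j /andP [_ hj]; rewrite (@Kdecomp n i j hi hj) mulr_suml mulr_sumr.
  by [].
under eq_bigr do rewrite exchange_big_nat.
rewrite exchange_big_nat; apply: eq_bigr => k _.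
rewrite /Sx expr2 mulr_suml mulr_sumr; apply: eq_bigr => i _.
rewrite mulr_sumr mulr_sumr; apply: eq_bigr => j _.
rewrite geq_max; case: (i <= k)%N; case: (j <= k)%N => /=; ring.
Qed.

Lemma Sx_T n (x : nat -> R) k : (k < n)%N -> Sx n x k = \sum_(0 <= i < k.+1) x i.
Proof.
move=> hk; rewrite /Sx (big_cat_nat _ (n := k.+1)) //= [X in _ + X]big1_seq ?addr0.
  by apply: eq_big_nat => i /andP [_ h]; rewrite -ltnS h.
by move=> i; rewrite mem_index_iota => /andP [_ /andP [h _]]; rewrite leqNgt h.
Qed.

Lemma sq_bound n (x : nat -> R) :
  \sum_(0 <= i < n) x i ^+ 2 <= 4 * \sum_(0 <= k < n) (\sum_(0 <= i < k.+1) x i) ^+ 2.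
Proof.
set T := fun m => \sum_(0 <= i < m) x i.
have hx : forall i, x i = T i.+1 - T i.
  by move=> i; rewrite /T big_nat_recr //=; ring.
have H1 : \sum_(0 <= i < n) x i ^+ 2 <=
   \sum_(0 <= i < n) (2 * T i.+1 ^+ 2 + 2 * T i ^+ 2).
  apply: ler_sum_nat => i _; rewrite hx.
  rewrite -subr_ge0.
  have -> : 2 * T i.+1 ^+ 2 + 2 * T i ^+ 2 - (T i.+1 - T i) ^+ 2 = (T i.+1 + T i) ^+ 2 by ring.
  exact: sqr_ge0.
have H2 : \sum_(0 <= i < n) T i ^+ 2 <= \sum_(0 <= i < n) T i.+1 ^+ 2.
  case: n {H1} => [|m]; first by rewrite !big_geq.
  have T0 : T 0%N = 0 by rewrite /T big_geq.
  rewrite big_nat_recl // big_nat_recr //= T0 expr0n /= add0r addrC lerDr.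
  exact: sqr_ge0.
rewrite big_split /= -!mulr_sumr in H1.
change (\sum_(0 <= i < n) x i ^+ 2 <= 4 * \sum_(0 <= k < n) T k.+1 ^+ 2).
lra.
Qed.

Lemma coerc n (x : nat -> R) :
  \sum_(0 <= i < n) x i ^+ 2 <=
  4 * n%:R ^+ 2 * \sum_(0 <= i < n) x i * \sum_(0 <= j < n) Kf i j * x j.
Proof.
case: n => [|m]; first by rewrite !big_geq // mulr0.
set n := m.+1.
rewrite qf_decomp.
have H : (n%:R ^+ 2)^-1 * \sum_(0 <= k < n) (\sum_(0 <= i < k.+1) x i) ^+ 2
         <= \sum_(0 <= k < n) dd n k * Sx n x k ^+ 2.
  rewrite mulr_sumr; apply: ler_sum_nat => k /andP [_ hk].
  rewrite (@Sx_T n x k hk); apply: ler_wpM2r; first exact: sqr_ge0.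
  exact: dd_lb.
have hn : (0 : R) < n%:R ^+ 2 by rewrite exprn_gt0 // ltr0n.
apply: le_trans (@sq_bound n x) _.
set A := \sum_(0 <= k < n) _ in H *.
have -> : 4 * A = 4 * n%:R ^+ 2 * ((n%:R ^+ 2)^-1 * A).
  by field; rewrite gt_eqF.
by rewrite ler_pM2l // mulr_gt0.

Qed.
End S.

Section M.
Variable R : realType.
Variable m : nat.
Local Notation N := m.+1.

Definition sumsq (v : 'cV[R]_N) := \sum_(i < N) v i 0 ^+ 2.
Definition xf (v : 'cV[R]_N) (k : nat) : R := v (inord k) 0.

Lemma vnorm2E v : vnorm2 v = Num.sqrt (sumsq v).
Proof. by []. Qed.

Lemma sumsqE v : sumsq v = \sum_(0 <= i < N) xf v i ^+ 2.
Proof.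
rewrite big_mkord /sumsq; apply: eq_bigr => i _; by rewrite /xf inord_val.
Qed.

Lemma KvE v (i : 'I_N) : (Kmat R N *m v) i 0 = \sum_(0 <= j < N) Kf R i j * xf v j.
Proof.
rewrite mxE big_mkord; apply: eq_bigr => j _; by rewrite /xf inord_val mxE.
Qed.

Lemma M1 v : sumsq (Kmat R N *m v) <= 16 * sumsq v.
Proof.
rewrite sumsqE (sumsqE v).
have -> : \sum_(0 <= i < N) xf (Kmat R N *m v) i ^+ 2 =
          \sum_(0 <= i < N) (\sum_(0 <= j < N) Kf R i j * xf v j) ^+ 2.
  apply: eq_big_nat => i /andP [_ hi]; rewrite {1}/xf KvE inordK //.
exact: Kbound.
Qed.

Lemma M2 v : sumsq v <= 4 * N%:R ^+ 2 * \sum_(i < N) v i 0 * (Kmat R N *m v) i 0.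
Proof.
rewrite sumsqE.
have -> : \sum_(i < N) v i 0 * (Kmat R N *m v) i 0 =
   \sum_(0 <= i < N) xf v i * \sum_(0 <= j < N) Kf R i j * xf v j.
  rewrite big_mkord; apply: eq_bigr => i _; by rewrite KvE /xf inord_val.
exact: coerc.
Qed.

Lemma young_sum (a : R) (u w : 'cV[R]_N) : 0 < a ->
  \sum_(i < N) u i 0 * w i 0 <= (sumsq u * a + sumsq w / a) / 2.
Proof.
move=> a0; rewrite /sumsq mulr_suml mulr_suml -big_split mulr_suml.
apply: ler_sum => i _; exact: young.
Qed.

Lemma sumsq_ge0 v : 0 <= sumsq v.
Proof. by apply: sumr_ge0 => i _; exact: sqr_ge0. Qed.

Lemma from_sq (c : R) (a b : 'cV[R]_N) : 0 <= c -> sumsq a <= c ^+ 2 * sumsq b ->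
  vnorm2 a <= c * vnorm2 b.
Proof.
move=> c0 h; rewrite !vnorm2E.
have -> : c = Num.sqrt (c ^+ 2) by rewrite sqrtr_sqr ger0_norm.
rewrite -sqrtrM ?sqr_ge0 // ler_sqrt //.
by apply: mulr_ge0; [exact: sqr_ge0 | exact: sumsq_ge0].
Qed.

Lemma ratio (c : R) (a b : 'cV[R]_N) : vnorm2 a <= c * vnorm2 b -> 0 <= c ->
  vnorm2 a / vnorm2 b <= c.
Proof.
move=> h c0.
have [->|nz] := eqVneq (vnorm2 b) 0; first by rewrite invr0 mulr0.
have pos : 0 < vnorm2 b by rewrite lt_def nz sqrtr_ge0.
by rewrite ler_pdivrMr.
Qed.

Lemma Ksym : (Kmat R N)^T = Kmat R N.
Proof. by apply/matrixP => i j; rewrite !mxE maxnC. Qed.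

Lemma sumsq0 v : sumsq v <= 0 -> v = 0.
Proof.
move=> h.
have h0 : sumsq v = 0 by apply/eqP; rewrite eq_le h sumsq_ge0.
apply/matrixP => i j; rewrite (ord1 j) mxE.
have := psumr_eq0P (fun k _ => sqr_ge0 (v k 0)) h0 (i:=i) isT.
by move/eqP; rewrite sqrf_eq0 => /eqP.
Qed.

Lemma Kunit : Kmat R N \in unitmx.
Proof.
rewrite unitmxE unitfE; apply/negP => /det0P [r rn0 rK].
set u := r^T.
have Ku : Kmat R N *m u = 0 by rewrite /u -Ksym -trmx_mul rK trmx0.
have := M2 u; rewrite Ku.
under eq_bigr do rewrite [(0 : 'cV_N) _ _]mxE mulr0.
rewrite big1 // mulr0 => /sumsq0 u0.
by move: rn0; rewrite -[r]trmxK -/u u0 trmx0 eqxx.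
Qed.

Local Open Scope classical_set_scope.
Lemma nonempty_set (f : 'cV[R]_N -> R) :
  [set f x | x in [set x : 'cV[R]_N | x != 0]] !=set0.
Proof.
exists (f (const_mx 1)); exists (const_mx 1) => //=.
apply/eqP => /matrixP /(_ ord0 ord0); rewrite !mxE => /eqP; by rewrite oner_eq0.
Qed.

End M.

Theorem proposition4 (R : realType) (n : nat) (hn : (1 <= n)%N) :
  [/\ Kmat R n \in unitmx,
      opnorm (Kmat R n) <= 4
    & opnorm (invmx (Kmat R n)) <= 4 * (n%:R) ^+ 2].
Proof.
case: n hn => [//|m] _.
have KU := @Kunit R m.
split => //.
- rewrite /opnorm; apply: ge_sup; first exact: nonempty_set.
  move=> _ [x hx <-]; apply: ratio => //.
  apply: from_sq => //.
  by have := @M1 R m x; rewrite (_ : (4 : R) ^+ 2 = 16) //; rewrite expr2; lra.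
- rewrite /opnorm; apply: ge_sup; first exact: nonempty_set.
  move=> _ [x hx <-].
  have c0 : (0 : R) <= 4 * m.+1%:R ^+ 2 by rewrite mulr_ge0 // sqr_ge0.
  apply: ratio => //; apply: from_sq => //.
  set z := invmx (Kmat R m.+1) *m x.
  have Kz : Kmat R m.+1 *m z = x by rewrite /z mulKVmx.
  set c := 4 * m.+1%:R ^+ 2.
  have cp : 0 < c by rewrite mulr_gt0 // exprn_gt0 // ltr0n.
  have h1 := @M2 R m z; rewrite Kz -/c in h1.
  have cp' : 0 < c^-1 by rewrite invr_gt0.
  have h2 := @young_sum R m _ z x cp'.
  rewrite invrK in h2.
  have h3 : sumsq R m z <= c * ((sumsq R m z / c + sumsq R m x * c) / 2).
    apply: le_trans h1 _; rewrite ler_pM2l //.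
  have e : c * ((sumsq R m z / c + sumsq R m x * c) / 2) = sumsq R m z / 2 + c ^+ 2 * sumsq R m x / 2.
    by field; rewrite gt_eqF.
  rewrite e in h3; lra.
Qed.
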